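(* Let $\mathcal{X}\subset\mathbb{R}^d$ be bounded and let $\mathcal{M}_f$ be a set of finite measures on $\mathcal{X}$, all of which admit densities with respect to Lebesgue measure ($\Lambda$ having density $\lambda$). Then the scoring function $S:\mathcal{M}_f\times\mathbb{M}_0\to\mathbb{R}$ defined by $$S(\Lambda,\{y_1,\dots,y_n\})=-\sum_{i=1}^n\log\lambda(y_i)+\int_{\mathcal{X}}\lambda(y)\,dy$$ for $n\in\mathbb{N}$ and $S(\Lambda,\emptyset)=\int_{\mathcal{X}}\lambda(y)\,dy$ is a strictly consistent scoring function for the intensity (measure) of finite point processes on $\mathcal{X}$ with intensity measure in $\mathcal{M}_f$.
   Context: $\mathbb{M}_0$ is the space of finite counting measures on $\mathcal{X}$, realizations written as point sets. The intensity measure of $\Phi$ is $B\mapsto\mathbb{E}\Phi(B)$. Strict consistency: for every point process $\Phi$ in the class (expected scores assumed to exist) with intensity measure $\Lambda$, $\mathbb{E}S(Q,\Phi)\ge\mathbb{E}S(\Lambda,\Phi)$ for all $Q\in\mathcal{M}_f$, with equality only if $Q=\Lambda$. *)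

(* Defs.v *)
From HB Require Import structures.
From mathcomp Require Import all_boot all_order all_algebra.
From mathcomp Require Import all_classical all_reals all_analysis.
Set Implicit Arguments.
Unset Strict Implicit.
Unset Printing Implicit Defensive.
Import Order.TTheory GRing.Theory Num.Theory.
Local Open Scope classical_set_scope.
Local Open Scope ring_scope.

(* Points of R^d are d-tuples of reals, with the product (= Borel)
   sigma-algebra provided by MathComp-Analysis on [n.-tuple T]. *)

Section Defs.
Variables (R : realType) (d : nat).
Local Notation pt := (d.-tuple R).

Definition box (a b : 'I_d -> R) : set pt :=
  [set x | forall i, a i <= tnth x i <= b i].

(* [leb] is Lebesgue measure on (the Borel sets of) R^d: it gives every
   box its volume.  (This determines it uniquely on the Borel sets.) *)
Definition is_lebesgue (leb : {measure set pt -> \bar R}) : Prop :=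
  forall a b : 'I_d -> R, (forall i, a i <= b i) ->
    leb (box a b) = (\prod_(i < d) (b i - a i))%:E.

Definition bounded_region (X : set pt) : Prop :=
  exists M : R, forall x, X x -> forall i, `|tnth x i| <= M.

Definition count_in (B : set pt) (s : seq pt) : nat :=
  count (fun y => `[< B y >]) s.

Definition is_density (leb : {measure set pt -> \bar R}) (X : set pt)
    (f : pt -> R) : Prop :=
  [/\ measurable_fun X f, (forall x, X x -> 0 <= f x) &
      leb.-integrable X (EFin \o f)].

Definition density_measure (leb : {measure set pt -> \bar R}) (X : set pt)
    (f : pt -> R) (B : set pt) : \bar R :=
  (\int[leb]_(y in B `&` X) (f y)%:E)%E.

(* A finite point process on X, defined on the probability space
   (Omega, P): a random finite counting measure, represented by the list of
   its points (with multiplicity), all lying in X, and measurable for the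
   usual sigma-algebra on M_0 (generated by the counts Phi(B)). *)
Definition is_point_process dO (Omega : measurableType dO) (X : set pt)
    (Phi : Omega -> seq pt) : Prop :=
  (forall w y, y \in Phi w -> X y) /\
  (forall B : set pt, measurable B ->
     measurable_fun setT (fun w => ((count_in B (Phi w))%:R : R))).

Definition intensity dO (Omega : measurableType dO) (P : probability Omega R)
    (Phi : Omega -> seq pt) (B : set pt) : \bar R :=
  (\int[P]_w ((count_in B (Phi w))%:R : R)%:E)%E.

Definition neglog (r : R) : \bar R :=
  if 0 < r then (- ln r)%:E else +oo%E.

Definition log_score (leb : {measure set pt -> \bar R}) (X : set pt)
    (lam : pt -> R) (s : seq pt) : \bar R :=
  ((\sum_(y <- s) neglog (lam y)) + \int[leb]_(x in X) (lam x)%:E)%E.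

End Defs.

(* Main.v *)
Require Import Defs.
From HB Require Import structures.
From mathcomp Require Import all_boot all_order all_algebra.
From mathcomp Require Import all_classical all_reals all_analysis.
Import Order.TTheory GRing.Theory Num.Theory.
From mathcomp Require Import measurable_realfun.
Import numFieldNormedType.Exports.
From mathcomp Require Import ring lra.
Local Open Scope classical_set_scope.
Local Open Scope ring_scope.

Section Helpers.
Context (R : realType).

Lemma expRNln (l : R) : 0 < l -> expR (- ln l) = l^-1.
Proof. by move=> l0; rewrite expRN lnK. Qed.

Lemma key_ge0 (t : R) : 0 < t -> 0 <= t - 1 - ln t.
Proof.
move=> t0; have := expR_ge1Dx (ln t); rewrite lnK// => h.
lra.
Qed.

Lemma key_eq0 (t : R) : 0 < t -> t - 1 - ln t = 0 -> t = 1.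
Proof.
move=> t0 h; have [lt0|] := eqVneq (ln t) 0.
  by apply/eqP; rewrite -ln_eq0// lt0.
move=> /expR_gt1Dx; rewrite lnK// => h2.
lra.
Qed.

Lemma psi_real (a b : R) : 0 < a -> 0 < b ->
  - ln b + (ln a + b * expR (- ln a) - 1) = b / a - 1 - ln (b / a).
Proof.
move=> a0 b0; rewrite expRNln// ln_div ?posrE//.
by rewrite opprB; ring.
Qed.

Local Open Scope ereal_scope.

Lemma psi_ge0 (l r : R) : (0 <= r)%R ->
  0 <= neglog r + (ln l + r * expR (- ln l) - 1)%:E.
Proof.
move=> r0; have el : ln l = ln (expR (ln l)) by rewrite expRK.
rewrite el; set a := expR (ln l); have a0 : (0 < a)%R by exact: expR_gt0.
rewrite /neglog; case: ifPn => [rp|]; last by rewrite /= leey.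
rewrite -EFinD lee_fin psi_real//; apply: key_ge0.
exact: divr_gt0.
Qed.

Lemma psi_eq0 (l r : R) : (0 < l)%R -> (0 <= r)%R ->
  neglog r + (ln l + r * expR (- ln l) - 1)%:E = 0 -> r = l.
Proof.
move=> l0 r0; rewrite /neglog; case: ifPn => [rp|]; last by [].
rewrite -EFinD psi_real// => -[] /key_eq0.
have l0' : l != 0%R by rewrite gt_eqF.
move=> /(_ (divr_gt0 rp l0)) /eqP; rewrite -(divff l0').
by move=> /eqP /(mulIf (invr_neq0 l0')).
Qed.

Lemma ident (l : R) (e : \bar R) (rho : R) : (0 < l)%R ->
  e + rho%:E = neglog l + (e + (ln l + rho - 1)%:E) + 1.
Proof.
move=> l0; rewrite /neglog l0.
case: e => [r| |] //=.
by rewrite -!EFinD; congr (_%:E); ring.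
Qed.

Lemma final_alg (i cl cq h b g : \bar R) :
  cl \is a fin_num -> cq \is a fin_num -> h \is a fin_num ->
  b \is a fin_num -> g \is a fin_num -> 0 <= i -> b <= cq ->
  i + cl + cq = h + b + cl - g ->
  g <= h /\ (h = g -> i = 0 /\ b = cq).
Proof.
move=> /fineK <- /fineK <- /fineK <- /fineK <- /fineK <-.
set CL := fine cl; set CQ := fine cq; set Hh := fine h; set Bb := fine b; set Gg := fine g.
case: i => [r| |] //.
rewrite !lee_fin -EFinN -!EFinD => r0 bq [] e; split; first lra.
by move=> [] hg; split; congr (_%:E); lra.
Qed.

Lemma rho_lam (l r : R) : (0 < l)%R -> (r * expR (- ln l) * l = r)%R.
Proof. by move=> l0; rewrite expRNln// -mulrA mulVf ?gt_eqF// mulr1. Qed.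

End Helpers.

Section Campbell.
Context (R : realType) (d : nat).
Local Notation pt := (d.-tuple R).
Variables (leb : {measure set pt -> \bar R}) (X : set pt) (mX : measurable X).
Variables (dO : measure_display) (Omega : measurableType dO)
  (P : probability Omega R) (Phi : Omega -> seq pt)
  (hPhi : is_point_process X Phi) (lam : pt -> R) (hlam : is_density leb X lam)
  (hint : forall B, measurable B ->
            intensity P Phi B = density_measure leb X lam B).

Local Open Scope ereal_scope.

Lemma count_in_sum (A : set pt) (s : seq pt) :
  ((count_in A s)%:R : R)%:E = \sum_(y <- s) (\1_A y)%:E.
Proof.
elim: s => [|y s IH]; first by rewrite big_nil.
rewrite big_cons /count_in /= -/(count_in A s) natrD EFinD IH.
by congr (_ + _).
Qed.

Import HBNNSimple.

Lemma campbell_nnsfun (h : {nnsfun pt >-> R}) :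
  measurable_fun setT (fun w => (\sum_(y <- Phi w) (h y)%:E : \bar R)) /\
  \int[P]_w (\sum_(y <- Phi w) (h y)%:E) =
  \int[leb]_(x in X) ((h x)%:E * (lam x)%:E).
Proof.
have [mlam lam0 ilam] := hlam.
set S := finmap.enum_fset (fset_set (range h)).
have hE y : (h y)%:E = \sum_(r <- S) (r%:E * (\1_(h @^-1` [set r]) y)%:E).
  by rewrite [h y]fimfunE fsbig_finite ?fimfunP//= -sumEFin; apply: eq_bigr => r _; rewrite EFinM.
have S0 r : r \in S -> 0 <= r%:E.
  rewrite /S in_fset_set ?fimfunP// inE => -[x _ <-]; rewrite lee_fin; exact: fun_ge0.
have hE' y : (h y)%:E = \sum_(r <- S) ((`|r|)%:E * (\1_(h @^-1` [set r]) y)%:E).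
  rewrite hE; apply: eq_big_seq => r /S0; rewrite lee_fin => r0.
  by rewrite ger0_norm.
have FE w : \sum_(y <- Phi w) (h y)%:E =
    \sum_(r <- S) ((`|r|)%:E * ((count_in (h @^-1` [set r]) (Phi w))%:R : R)%:E).
  under eq_bigr do rewrite hE'.
  rewrite exchange_big /=; apply: eq_big_seq => r rS.
  by rewrite count_in_sum ge0_sume_distrr// => y _.
have mc r : measurable_fun setT
    (fun w => ((count_in (h @^-1` [set r]) (Phi w))%:R : R)%:E).
  by apply/measurable_EFinP; apply: hPhi.2.
split.
  rewrite (_ : (fun w => _) = fun w => \sum_(r <- S)
    ((`|r|)%:E * ((count_in (h @^-1` [set r]) (Phi w))%:R : R)%:E)); last first.
    by apply/funext => w; rewrite FE.
  by apply: emeasurable_sum => r; apply: measurable_funeM.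
under eq_integral do rewrite FE.
rewrite ge0_integral_sum//; last by move=> r; apply: measurable_funeM.
have mlamE : measurable_fun X (EFin \o lam) by apply/measurable_EFinP.
have -> : \int[leb]_(x in X) ((h x)%:E * (lam x)%:E) = \int[leb]_(x in X)
    \sum_(r <- S) ((`|r|)%:E * (\1_(h @^-1` [set r]) x)%:E * (lam x)%:E).
  by apply: eq_integral => x _; rewrite hE' ge0_sume_distrl // => r _.
have mi r : measurable_fun X (fun x => (`|r|)%:E * (\1_(h @^-1` [set r]) x)%:E * (lam x)%:E).
  apply: emeasurable_funM => //.
  apply: measurable_funeM; apply/measurable_EFinP.
  exact: measurable_indic.
have i0 r x : X x -> 0 <= (`|r|)%:E * (\1_(h @^-1` [set r]) x)%:E * (lam x)%:E.
  move=> Xx; apply: mule_ge0; last by rewrite lee_fin lam0.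
  by apply: mule_ge0; rewrite lee_fin.
rewrite (ge0_integral_sum _ mX mi i0).
apply: eq_bigr => r _.
rewrite ge0_integralZl//.
under [RHS]eq_integral do rewrite -muleA.
have mi' : measurable_fun X (fun x => (\1_(h @^-1` [set r]) x)%:E * (lam x)%:E).
  apply: emeasurable_funM => //; apply/measurable_EFinP.
  exact: measurable_indic.
rewrite (ge0_integralZl _ mX mi'); last 2 first.
- by move=> x Xx; apply: mule_ge0; rewrite lee_fin// lam0.
- by [].
congr (_ * _).
have := @hint _ (measurable_funPTI h (measurable_set1 r)).
rewrite /intensity /density_measure => ->.
rewrite integral_mkcondl; apply: eq_integral => x Xx.
rewrite patchE indicE; case: (boolP (x \in _)) => _ /=.
  by rewrite mul1e.
by rewrite mul0e.
Qed.

Lemma campbell (f : pt -> \bar R) (mf : measurable_fun X f)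
  (f0 : forall x, X x -> 0 <= f x) :
  measurable_fun setT (fun w => (\sum_(y <- Phi w) f y : \bar R)) /\
  \int[P]_w (\sum_(y <- Phi w) f y) = \int[leb]_(x in X) (f x * (lam x)%:E).
Proof.
have [mlam lam0 ilam] := hlam.
have mlamE : measurable_fun X (EFin \o lam) by apply/measurable_EFinP.
pose g := nnsfun_approx mX mf.
have cg x : X x -> (fun n => (g n x)%:E) @ \oo --> f x.
  by move=> Xx; exact: cvg_nnsfun_approx.
have ndg x n m : (n <= m)%N -> (g n x <= g m x)%R.
  by move=> nm; have /lefP := nd_nnsfun_approx mX mf nm; apply.
pose F n w := \sum_(y <- Phi w) (g n y)%:E.
have FF w : F ^~ w @ \oo --> \sum_(y <- Phi w) f y.
  rewrite big_seq /F; under eq_fun do rewrite big_seq.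
  apply: cvg_nnesum => j jP.
    by apply: nearW => n; rewrite lee_fin.
  by apply: cg; apply: hPhi.1 jP.
have mF n : measurable_fun setT (F n) := (campbell_nnsfun (g n)).1.
have F0 n w : setT w -> 0 <= F n w.
  by move=> _; apply: sume_ge0 => y _; rewrite lee_fin.
have ndF w : setT w -> nondecreasing_seq (F ^~ w).
  by move=> _ n m nm; apply: lee_sum => y _; rewrite lee_fin ndg.
split; first by apply: emeasurable_fun_cvg mF _ => w _; exact: FF.
have := monotone_convergence P measurableT mF F0 ndF.
under eq_integral do rewrite (cvg_lim _ (FF _))//.
move=> ->.
pose G n x := (g n x)%:E * (lam x)%:E.
have mG n : measurable_fun X (G n).
  by apply: emeasurable_funM => //; apply/measurable_EFinP; exact: measurable_funTS.
have G0 n x : X x -> 0 <= G n x.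
  by move=> Xx; apply: mule_ge0; rewrite lee_fin// lam0.
have ndG x : X x -> nondecreasing_seq (G ^~ x).
  by move=> Xx n m nm; apply: lee_wpmul2r; rewrite lee_fin ?lam0 ?ndg.
have := monotone_convergence leb mX mG G0 ndG.
have GG x : X x -> G ^~ x @ \oo --> f x * (lam x)%:E.
  by move=> Xx; apply: cvgeZr => //; exact: cg.
rewrite (eq_integral (fun x => f x * (lam x)%:E)); last first.
  by move=> x /set_mem Xx; rewrite (cvg_lim _ (GG x Xx)).
move=> ->; congr (limn _); apply/funext => n.
exact: (campbell_nnsfun (g n)).2.
Qed.

End Campbell.

Lemma measurable_neglog (R : realType) : measurable_fun setT (@neglog R).
Proof.
rewrite /neglog; apply: measurable_fun_ifT.
- rewrite (_ : (> 0%R) = (fun x : R => cst 0%R x < id x)%R) //.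
  apply: measurable_realfun.measurable_fun_ltr => //.
- apply: (measurableT_comp (f := EFin) (g := fun r : R => - ln r)%R) => //.
  by apply: measurable_funN; exact: measurable_ln.
- exact: measurable_cst.
Qed.

Theorem proposition4p3 (R : realType) (d : nat)
    (leb : {measure set (d.-tuple R) -> \bar R}) (hleb : is_lebesgue leb)
    (X : set (d.-tuple R)) (mX : measurable X) (bX : bounded_region X)
    (dO : measure_display) (Omega : measurableType dO)
    (P : probability Omega R) (Phi : Omega -> seq (d.-tuple R))
    (hPhi : is_point_process X Phi)
    (lam : d.-tuple R -> R) (hlam : is_density leb X lam)
    (hint : forall B, measurable B ->
                intensity P Phi B = density_measure leb X lam B)
    (q : d.-tuple R -> R) (hq : is_density leb X q)
    (ilam : P.-integrable setT (fun w => log_score leb X lam (Phi w)))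
    (iq : P.-integrable setT (fun w => log_score leb X q (Phi w))) :
  ((\int[P]_w log_score leb X lam (Phi w)
      <= \int[P]_w log_score leb X q (Phi w))%E /\
   ((\int[P]_w log_score leb X q (Phi w)
      = \int[P]_w log_score leb X lam (Phi w))%E ->
    forall B, measurable B ->
      density_measure leb X q B = density_measure leb X lam B)).
Proof.
Local Open Scope ereal_scope.
have [mlam lam0 ilam'] := hlam.
have [mq q0 iq'] := hq.
have C := @campbell R d leb X mX dO Omega P Phi hPhi lam hlam hint.
set cl := \int[leb]_(x in X) (lam x)%:E.
set cq := \int[leb]_(x in X) (q x)%:E.
have clfin : cl \is a fin_num by exact: integrable_fin_num.
have cqfin : cq \is a fin_num by exact: integrable_fin_num.
have cl0 : 0 <= cl by apply: integral_ge0 => x Xx; rewrite lee_fin lam0.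
have cq0 : 0 <= cq by apply: integral_ge0 => x Xx; rewrite lee_fin q0.
pose rho x := (q x * expR (- ln (lam x)))%R.
pose psi x := neglog (q x) + (ln (lam x) + rho x - 1)%:E.
have mrho : measurable_fun X rho.
  apply: measurable_funM => //.
  have mln : measurable_fun X (fun x => ln (lam x)).
    exact: (measurableT_comp (@measurable_ln R) mlam).
  exact: (measurableT_comp (@measurable_expR R) (measurable_funN mln)).
have mpsi : measurable_fun X psi.
  apply: emeasurable_funD.
    by apply: measurableT_comp => //; exact: measurable_neglog.
  apply: (measurableT_comp (f := EFin) (g := fun x => ln (lam x) + rho x - 1)%R) => //.
  apply: measurable_funB => //.
  apply: measurable_funD => //.
  exact: (measurableT_comp (@measurable_ln R) mlam).
have psi0 x : X x -> 0 <= psi x by move=> Xx; exact: psi_ge0 (q0 x Xx).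
have rho0 x : X x -> (0 <= rho x)%R.
  by move=> Xx; apply: mulr_ge0; [exact: q0|exact: expR_ge0].
have [mA IA] := C psi mpsi psi0.
have [mB IB] := C (EFin \o rho) (proj2 (measurable_EFinP _ _) mrho)
   (fun x Xx => (rho0 x Xx : (0 <= (EFin \o rho) x)%E)).
have [mN IN] := C (cst 1) (measurable_cst _) (fun _ _ => lee01).
pose Z := X `&` lam @^-1` [set 0%R].
have mZ : measurable Z := mlam mX _ (measurable_set1 0%R).
pose cZ w := ((count_in Z (Phi w))%:R : R).
have mcZ : measurable_fun setT cZ := hPhi.2 Z mZ.
pose N0 := setT `&` cZ @^-1` `]0%R, +oo[.
have mN0 : measurable N0 := mcZ measurableT _ (measurable_itv _).
have PN0 : P N0 = 0.
  have e1 : \int[P]_w (cZ w)%:E = 0.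
    have := @hint _ mZ; rewrite /intensity /density_measure => ->.
    rewrite (eq_integral (cst 0)) ?integral0// => x /set_mem [[Xx /= ->] _] //.
  apply/eqP; rewrite eq_le measure_ge0 andbT -e1.
  rewrite -[N0]setIT -integral_indic//.
  apply: ge0_le_integral => //.
  - by apply/measurable_EFinP; exact: measurable_indic.
  - by apply/measurable_EFinP.
  - move=> w _; rewrite lee_fin indicE; case: (boolP (w \in N0)) => [|_].
      move=> /set_mem [_ /=]; rewrite in_itv /= andbT /cZ ltr0n => cpos.
      by rewrite ler1n.
    by [].
have good w : ~ N0 w -> forall y, y \in Phi w -> (0 < lam y)%R.
  move=> Nw y yP; have Xy := hPhi.1 w y yP.
  rewrite lt_neqAle lam0 // andbT eq_sym.
  apply/eqP => ly0; apply: Nw; split => //=.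
  rewrite in_itv /= andbT /cZ ltr0n -has_count.
  by apply/hasP; exists y => //; apply/asboolP; split.
pose H w := log_score leb X q (Phi w).
pose G w := log_score leb X lam (Phi w).
pose Aw w := \sum_(y <- Phi w) psi y.
pose Bw w := \sum_(y <- Phi w) (EFin \o rho) y.
pose Nw w := \sum_(y <- Phi w) (cst 1%E y : \bar R).
pose K w := Aw w + Nw w + cq.
have Gfin w : ~ N0 w -> G w \is a fin_num.
  move=> Nw0; rewrite /G /log_score fin_numD -/cl clfin andbT.
  apply/sum_fin_numP => y yP _; rewrite /neglog (good w Nw0 y yP) //.
have ptw w : ~ N0 w -> H w + Bw w + cl = G w + K w.
  move=> Nw0.
  rewrite /H /G /K /Aw /Bw /Nw /log_score -/cl -/cq.
  set SA := \sum_(y <- Phi w) neglog (q y).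
  set SB := \sum_(y <- Phi w) (EFin \o rho) y.
  set SL := \sum_(y <- Phi w) neglog (lam y).
  set SP := \sum_(y <- Phi w) psi y.
  set SN := \sum_(y <- Phi w) cst 1%E y.
  have e : SA + SB = SL + SP + SN.
    rewrite /SA /SB /SL /SP /SN -!big_split.
    by apply: eq_big_seq => y yP; rewrite [LHS](@ident R (lam y)) ?(good w Nw0 y yP).
  rewrite (addeAC SA cq SB) e.
  have AC5 (a b c x z : \bar R) : a + b + c + x + z = a + z + (b + c + x).
    by rewrite -!addeA [in RHS](addeC z) -!addeA.
  exact: AC5.
have KE w : ~ N0 w -> K w = ((fun w => H w + Bw w + cl) \- G) w.
  move=> Nw0; rewrite /= ptw// (addeC (G w)) addeK//; exact: Gfin.
have mrhoE : measurable_fun X (EFin \o rho) by apply/measurable_EFinP.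
have mlamE : measurable_fun X (EFin \o lam) by apply/measurable_EFinP.
have mqE : measurable_fun X (EFin \o q) by apply/measurable_EFinP.
have mrl : measurable_fun X (fun x => (EFin \o rho) x * (lam x)%:E).
  exact: emeasurable_funM.
have rl0 x : X x -> 0 <= (EFin \o rho) x * (lam x)%:E.
  by move=> Xx; apply: mule_ge0; rewrite lee_fin ?rho0 ?lam0.
have q0E x : X x -> 0 <= (q x)%:E by move=> Xx; rewrite lee_fin q0.
have rlq x : X x -> (EFin \o rho) x * (lam x)%:E <= (q x)%:E.
  move=> Xx; rewrite /= -EFinM lee_fin.
  have [l0|l0] := eqVneq (lam x) 0%R; first by rewrite l0 mulr0 q0.
  have lp : (0 < lam x)%R by rewrite lt_neqAle eq_sym l0 lam0.
  by rewrite rho_lam.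
set b := \int[leb]_(x in X) ((EFin \o rho) x * (lam x)%:E).
have ble : b <= cq by exact: (ge0_le_integral leb mX rl0 mrl mqE rlq).
have b0 : 0 <= b by apply: integral_ge0.
have bfin : b \is a fin_num.
  by rewrite ge0_fin_numE// (le_lt_trans ble)// -ge0_fin_numE.
have Bw0 w : setT w -> 0 <= Bw w.
  by move=> _; rewrite /Bw big_seq; apply: sume_ge0 => y yP; rewrite lee_fin rho0 //; exact: (hPhi.1 w y yP).
have iB : P.-integrable setT Bw.
  apply/integrableP; split; first exact: mB.
  rewrite (eq_integral Bw); last by move=> w _; rewrite gee0_abs// Bw0.
  by rewrite IB -/b ltey_eq bfin.
have Aw0 w : setT w -> 0 <= Aw w.
  by move=> _; rewrite /Aw big_seq; apply: sume_ge0 => y yP; apply: psi0; exact: (hPhi.1 w y yP).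
have Nw0 w : setT w -> 0 <= Nw w.
  by move=> _; apply: sume_ge0 => y _; rewrite /= lee01.
set I := \int[leb]_(x in X) (psi x * (lam x)%:E).
have IK : \int[P]_w K w = I + cl + cq.
  have cq0' : forall w : Omega, setT w -> 0 <= cst cq w by move=> w0 Tw0; exact: cq0.
  have mAN : measurable_fun setT (fun w => Aw w + Nw w) by exact: emeasurable_funD.
  have AN0 : forall w, setT w -> 0 <= Aw w + Nw w.
    by move=> w _; rewrite adde_ge0// ?Aw0 ?Nw0.
  rewrite /K (ge0_integralD P measurableT AN0 mAN cq0' (measurable_cst _)).
  rewrite (ge0_integralD P measurableT Aw0 mA Nw0 mN).
  rewrite integral_cst//.
  set z := (Y in cq * Y); have -> : z = 1 by exact: probability_setT.
  rewrite mule1.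
  rewrite /Aw IA -/I /Nw IN; congr (_ + _ + _).
  by apply: eq_integral => x _; rewrite /= mul1e.
have PT (r : \bar R) : \int[P]_(x in setT) cst r x = r.
  rewrite integral_cst//.
  set z := (Y in r * Y); have -> : z = 1 by exact: probability_setT.
  by rewrite mule1.
have icl : P.-integrable setT (cst cl).
  by rewrite -(fineK clfin); exact: finite_measure_integrable_cst.
have iHB : P.-integrable setT (fun w => H w + Bw w + cl).
  exact: (integrableD measurableT (integrableD measurableT iq iB) icl).
pose F1 := fun w => H w + Bw w + cl - G w.
have iF1 : P.-integrable setT F1 by exact: (integrableB measurableT iHB ilam).
have mK : measurable_fun setT K.
  by apply: emeasurable_funD => //; apply: emeasurable_funD.
have KF1 : \int[P]_w K w = \int[P]_w F1 w.
  apply: (ae_eq_integral F1 K measurableT mK (measurable_int _ iF1)).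
  exists N0; split => // w /= nw; apply: contrapT => Nw1.
  by apply: nw => _; exact: KE.
have IF1 : \int[P]_w F1 w = \int[P]_w H w + b + cl - \int[P]_w G w.
  rewrite /F1 (integralB measurableT iHB ilam).
  rewrite (integralD measurableT (integrableD measurableT iq iB) icl).
  rewrite (integralD measurableT iq iB) /Bw IB -/b.
  by rewrite PT.
have hfin : \int[P]_w H w \is a fin_num by exact: integrable_fin_num.
have gfin : \int[P]_w G w \is a fin_num by exact: integrable_fin_num.
have pl0 x : X x -> 0 <= psi x * (lam x)%:E.
  by move=> Xx; apply: mule_ge0; [exact: psi0|rewrite lee_fin lam0].
have I0 : 0 <= I by apply: integral_ge0.
have EQ : I + cl + cq = \int[P]_w H w + b + cl - \int[P]_w G w.
  by rewrite -IK KF1 IF1.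
have [res1 res2] := @final_alg R _ _ _ _ _ _ clfin cqfin hfin bfin gfin I0 ble EQ.
split; first exact: res1.
move=> hg B mB0; have [I00 bcq] := res2 hg.
have mpl : measurable_fun X (fun x => psi x * (lam x)%:E).
  exact: emeasurable_funM.
have aeA : ae_eq leb X (fun x => psi x * (lam x)%:E) (cst 0).
  apply/(ae_eq_integral_abs leb mX mpl).
  rewrite -I00; apply: eq_integral => x /set_mem Xx.
  by rewrite gee0_abs// pl0.
have irl : leb.-integrable X (fun x => (EFin \o rho) x * (lam x)%:E).
  apply: (le_integrable mX mrl _ iq') => x Xx.
  by rewrite gee0_abs ?rl0// gee0_abs ?q0E//; exact: rlq.
have mqrl : measurable_fun X (fun x => (q x)%:E - (EFin \o rho) x * (lam x)%:E).
  exact: emeasurable_funB.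
have aeB : ae_eq leb X (fun x => (q x)%:E - (EFin \o rho) x * (lam x)%:E) (cst 0).
  apply/(ae_eq_integral_abs leb mX mqrl).
  transitivity (cq - b); last by rewrite bcq subee.
  rewrite -(integralB mX iq' irl); apply: eq_integral => x /set_mem Xx.
  rewrite gee0_abs//= -EFinD lee_fin subr_ge0.
  by have := rlq x Xx; rewrite /= -EFinM lee_fin.
have aeQ : ae_eq leb X (EFin \o q) (EFin \o lam).
  apply: filterS2 aeA aeB => x hA hB Xx.
  have {hA}hA := hA Xx; have {hB}hB := hB Xx.
  rewrite /=; congr (_%:E).
  have [l0|l0] := eqVneq (lam x) 0%R.
    by move: hB; rewrite l0 mule0 sube0 /= => -[] ->.
  have lp : (0 < lam x)%R by rewrite lt_neqAle eq_sym l0 lam0.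
  move: hA => /eqP; rewrite mule_eq0 eqe (negbTE l0) orbF => /eqP hA.
  exact: psi_eq0 lp (q0 x Xx) hA.
rewrite /density_measure.
have mBX : measurable (B `&` X) by exact: measurableI.
apply: (ae_eq_integral (EFin \o lam) (EFin \o q) mBX).
- exact: (measurable_funS mX (@subIsetr _ B X) mqE).
- exact: (measurable_funS mX (@subIsetr _ B X) mlamE).
- by apply: filterS aeQ => x h [_ Xx]; exact: h.
Qed.
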